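(* Let $\mathbf n=(n_1,\dots,n_r)$ with $r\ge1$ and $n_i\ge1$ for all $i$. If $k\ge\big\lfloor\frac12\sum_{i=1}^r n_i\big\rfloor$, then $\delta_{pr}(k,\mathbf n)\ge\sum_{i=1}^r n_i$.
   Context: $\Delta_m$ denotes the $m$-dimensional simplex; for $\mathbf n=(n_1,\dots,n_r)$, $\Delta_{\mathbf n}:=\Delta_{n_1}\times\dots\times\Delta_{n_r}$. The $k$-skeleton of a polytope is the poset of its faces of dimension at most $k$; two $k$-skeleta are combinatorially equivalent if these posets are isomorphic. A convex polytope is $(k,\mathbf n)$-PSN if its $k$-skeleton is combinatorially equivalent to that of $\Delta_{\mathbf n}$, and $(k,\mathbf n)$-PPSN if in addition it is the image under a linear projection of a polytope combinatorially equivalent to $\Delta_{\mathbf n}$. $\delta_{pr}(k,\mathbf n)$ is the smallest dimension of a $(k,\mathbf n)$-PPSN polytope. *)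

(* Defs.v *)
From HB Require Import structures.
From mathcomp Require Import all_boot all_order all_algebra.
Set Implicit Arguments. Unset Strict Implicit. Unset Printing Implicit Defensive.
Import Order.TTheory GRing.Theory Num.Theory.
Local Open Scope ring_scope.

Section Polytopes.
Variable R : realFieldType.

(* A polytope in R^d is presented as conv(V) for a finite family of points
   V : I -> 'rV[R]_d.  x lies in conv(V): *)
Definition in_conv (d : nat) (I : finType) (V : I -> 'rV[R]_d) (x : 'rV[R]_d) : Prop :=
  exists w : I -> R, (forall i, 0 <= w i) /\ \sum_i w i = 1 /\ x = \sum_i w i *: V i.

Definition conv_eq (d : nat) (I J : finType) (V : I -> 'rV[R]_d) (V' : J -> 'rV[R]_d) : Prop :=
  forall x, in_conv V x <-> in_conv V' x.

(* A face F is recorded by the set of indices {i | V i \in F}, which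
   determines F = conv(V restricted to it); distinct faces give distinct sets. *)
Definition is_face (d : nat) (I : finType) (V : I -> 'rV[R]_d) (S : {set I}) : Prop :=
  exists (c : 'cV[R]_d) (b : R),
    (forall i, (V i *m c) 0 0 <= b) /\ S = [set i | (V i *m c) 0 0 == b].

(* dimension of the face recorded by S is at most k (the empty face has
   dimension -1, so always qualifies); the dimension of conv{V i | i in S} is the
   rank of the differences V i - V i0, i in S. *)
Definition face_dim_le (d : nat) (I : finType) (V : I -> 'rV[R]_d) (S : {set I}) (k : nat) : bool :=
  if [pick i in S] is Some i0 then
    (\rank (\matrix_(j < #|I|, l < d)
              (if enum_val j \in S then ((V (enum_val j) - V i0) 0 l)%R else 0%R)) <= k)%N
  else true.

Definition skel_face (d : nat) (I : finType) (V : I -> 'rV[R]_d) (k : option nat) (S : {set I}) : Prop :=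
  is_face V S /\ (if k is Some k' then face_dim_le V S k' else True).

(* isomorphism of the posets (ordered by inclusion) of faces of dimension <= k
   (or of all faces when k = None) *)
Definition skel_equiv (d1 d2 : nat) (I1 I2 : finType) (k : option nat)
    (V1 : I1 -> 'rV[R]_d1) (V2 : I2 -> 'rV[R]_d2) : Prop :=
  exists f : {set I1} -> {set I2},
    (forall S, skel_face V1 k S -> skel_face V2 k (f S)) /\
    (forall T, skel_face V2 k T -> exists2 S, skel_face V1 k S & f S = T) /\
    (forall S S', skel_face V1 k S -> skel_face V1 k S' ->
        (S \subset S') = (f S \subset f S')).

(* The standard product of simplices Delta_n = Delta_{n_0} x ... x Delta_{n_(r-1)}:
   vertices are the choices (j_i)_i with j_i <= n_i, realized as the point whose
   (i, j) coordinate is 1 iff j = j_i (so Delta_{n_i} = conv(e_0,...,e_{n_i})). *)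
Definition maxn_of (r : nat) (n : 'I_r -> nat) : nat := \max_(i < r) n i.

Definition delta_vert (r : nat) (n : 'I_r -> nat) :=
  {f : {ffun 'I_r -> 'I_(maxn_of n).+1} | [forall i, (f i <= n i)%N]}.

Definition delta_pt (r : nat) (n : 'I_r -> nat) (v : delta_vert n)
    : 'rV[R]_(r * (maxn_of n).+1) :=
  mxvec (\matrix_(i < r, j < (maxn_of n).+1) ((val v i == j)%:R : R)).

Definition PSN (d : nat) (I : finType) (k r : nat) (n : 'I_r -> nat) (V : I -> 'rV[R]_d) : Prop :=
  skel_equiv (Some k) V (@delta_pt r n).

(* conv(V) is (k,n)-PPSN: PSN, and the image under a linear map of a polytope
   combinatorially equivalent to Delta_n *)
Definition PPSN (d : nat) (I : finType) (k r : nat) (n : 'I_r -> nat) (V : I -> 'rV[R]_d) : Prop :=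
  PSN k n V /\
  exists (D : nat) (J : finType) (W : J -> 'rV[R]_D) (A : 'M[R]_(D, d)),
    skel_equiv None W (@delta_pt r n) /\ conv_eq V (fun j => W j *m A).

End Polytopes.

(* Main.v *)
Require Import Defs.
From HB Require Import structures.
From mathcomp Require Import all_boot all_order all_algebra.
From Stdlib Require Import ClassicalEpsilon.
Set Implicit Arguments. Unset Strict Implicit. Unset Printing Implicit Defensive.
Import Order.TTheory GRing.Theory Num.Theory.

Section Gen.
Local Open Scope ring_scope.
Variables (R : realFieldType) (d : nat) (I : finType) (V : I -> 'rV[R]_d).

Lemma face0 : is_face V set0.
Proof.
exists 0, 1; split=> [i|]; first by rewrite mulmx0 mxE ler01.
by apply/setP=> i; rewrite !inE mulmx0 mxE eq_sym oner_eq0.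
Qed.

Lemma addE (A B : 'M[R]_(1,1)) : (A + B) 0 0 = A 0 0 + B 0 0.
Proof. by rewrite [LHS]mxE. Qed.

Lemma faceI S1 S2 : is_face V S1 -> is_face V S2 -> is_face V (S1 :&: S2).
Proof.
move=> [c1 [b1 [h1 ->]]] [c2 [b2 [h2 ->]]].
exists (c1 + c2), (b1 + b2); split=> [i|].
  by rewrite mulmxDr addE lerD.
apply/setP=> i; rewrite !inE mulmxDr addE.
have := h1 i; have := h2 i.
set x := (V i *m c1) 0 0; set y := (V i *m c2) 0 0 => hy hx.
case: (ltrP x b1) => [lx|gx].
  have: x + y < b1 + b2 by rewrite ltr_leD.
  by move/lt_eqF => ->; rewrite (lt_eqF lx).
have ex : x = b1 by apply/eqP; rewrite eq_le hx gx.
by rewrite ex eqxx /= (inj_eq (addrI b1)).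
Qed.

Definition Mx (S : {set I}) (i0 : I) : 'M[R]_(#|I|, d) :=
  \matrix_(j < #|I|, l < d)
     (if enum_val j \in S then ((V (enum_val j) - V i0) 0 l)%R else 0%R).

Lemma row_Mx (S : {set I}) (i0 x : I) : x \in S -> row (enum_rank x) (Mx S i0) = V x - V i0.
Proof.
by move=> xS; apply/rowP=> l; rewrite mxE mxE enum_rankK xS.
Qed.

Lemma dim_mono (S S' : {set I}) k : S' \subset S -> face_dim_le V S k -> face_dim_le V S' k.
Proof.
move=> sub hS; rewrite /face_dim_le.
case: pickP => [i0' i0'S'|]//.
have i0'S : i0' \in S by apply: (subsetP sub).
move: hS; rewrite /face_dim_le.
case: pickP => [i0 i0S|/(_ i0')]; last by rewrite i0'S.
apply: leq_trans; apply: mxrankS.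
apply/row_subP=> j; rewrite -/(Mx S i0) -/(Mx S' i0').
have -> : row j (Mx S' i0') =
   if enum_val j \in S' then row (enum_rank (enum_val j)) (Mx S i0) - row (enum_rank i0') (Mx S i0) else 0.
  case: ifP => h.
    rewrite !row_Mx //; last by apply: (subsetP sub).
    by apply/rowP=> l; rewrite /Mx !mxE h opprB addrA subrK.
  by apply/rowP=> l; rewrite /Mx !mxE h.
by case: ifP => _; rewrite ?sub0mx // -scaleN1r addmx_sub ?scalemx_sub ?row_sub.
Qed.

Lemma dim_single (x : I) k : face_dim_le V [set x] k.
Proof.
rewrite /face_dim_le; case: pickP => [i0|]//; rewrite inE => /eqP ->.
have -> : (\matrix_(j < #|I|, l < d) (if enum_val j \in [set x] then ((V (enum_val j) - V x) 0 l)%R else 0%R)) = 0.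
  by apply/matrixP=> j l; rewrite !mxE inE; case: eqP => [->|]; rewrite ?subrr ?mxE.
by rewrite mxrank0.
Qed.

Lemma skel0 k : skel_face V (Some k) set0.
Proof. by split; [exact: face0 | rewrite /face_dim_le; case: pickP => // x; rewrite inE]. Qed.

Lemma dim_le_trans S k k' : (k <= k')%N -> face_dim_le V S k -> face_dim_le V S k'.
Proof. by move=> h; rewrite /face_dim_le; case: pickP => // i0 _ h'; apply: leq_trans h' h. Qed.

End Gen.
Section Delta.
Local Open Scope ring_scope.
Variables (R : realFieldType) (r : nat) (n : 'I_r -> nat).
Local Notation m := (maxn_of n).
Local Notation X := (delta_vert n).
Local Notation D := (@delta_pt R r n).

Lemma D_entry (y : X) i j : D y 0 (mxvec_index i j) = (val y i == j)%:R.
Proof. by rewrite /delta_pt mxvecE mxE. Qed.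

Lemma sum_mxvec p q (F : 'I_(p * q) -> R) :
  \sum_k F k = \sum_(i < p) \sum_(j < q) F (mxvec_index i j).
Proof.
rewrite (reindex (uncurry (@mxvec_index p q))) /=; last first.
  by case: (curry_mxvec_bij p q) => g g1 g2; exists g => x _; [apply: g1|apply: g2].
rewrite pair_big /=; apply: eq_bigr => [[i j]] _ //.
Qed.

Lemma tr_entry a b (A : 'M[R]_(a, b)) i j : A^T j i = A i j.
Proof. by rewrite [LHS]mxE. Qed.

Lemma sum_delta (x : 'I_m.+1) : \sum_(j < m.+1) ((x == j)%:R : R) = 1.
Proof.
rewrite (bigD1 x) //= eqxx big1 ?addr0 // => j /negPf; by rewrite eq_sym => ->.
Qed.

Lemma D_dot (y : X) (B : 'M[R]_(r, m.+1)) :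
  (D y *m (mxvec B)^T) 0 0 = \sum_i B i (val y i).
Proof.
rewrite [LHS]mxE sum_mxvec; apply: eq_bigr => i _.
rewrite (bigD1 (val y i)) //= big1 ?addr0.
  by rewrite D_entry tr_entry mxvecE eqxx mul1r.
by move=> j /negPf hj; rewrite D_entry eq_sym hj mul0r.
Qed.

Definition FA (A : 'I_r -> {set 'I_m.+1}) : {set X} :=
  [set y : X | [forall i, val y i \in A i]].

Lemma FA_face A : is_face D (FA A).
Proof.
exists (mxvec (\matrix_(i, j) ((j \in A i)%:R : R)))^T, r%:R.
have E y : (D y *m (mxvec (\matrix_(i, j) ((j \in A i)%:R : R)))^T) 0 0
     = (\sum_i (val y i \in A i : nat))%:R.
  by rewrite D_dot natr_sum; apply: eq_bigr => i _; rewrite mxE.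
have Hle y : (\sum_i (val y i \in A i : nat) <= r)%N.
  apply: (@leq_trans (\sum_(i < r) 1)%N).
    by apply: leq_sum => i _; apply: leq_b1.
  by rewrite sum_nat_const card_ord muln1.
split=> [y|].
  rewrite E ler_nat; apply: (@leq_trans (\sum_(i < r) 1)%N).
    by apply: leq_sum => i _; apply: leq_b1.
  by rewrite sum_nat_const card_ord muln1.
apply/setP=> y; rewrite !inE E eqr_nat.
have Hs : (\sum_i (val y i \in A i : nat) + \sum_i (~~ (val y i \in A i) : nat) = r)%N.
  rewrite -big_split /= (eq_bigr (fun _ => 1%N)) ?sum_nat_const ?card_ord ?muln1 //.
  by move=> i _; case: (_ \in _).
symmetry; apply/idP/forallP => [/eqP h i|h].
  have : (\sum_i (~~ (val y i \in A i) : nat) == 0)%N.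
    by rewrite -(eqn_add2l (\sum_i (val y i \in A i : nat))) addn0 Hs h.
  by rewrite sum_nat_eq0 => /forallP /(_ i); case: (_ \in _).
have : (\sum_i (~~ (val y i \in A i) : nat) == 0)%N.
  by rewrite sum_nat_eq0; apply/forallP=> i; rewrite h.
by move/eqP=> h0; move: Hs; rewrite h0 addn0 => ->.
Qed.


Lemma subE a b (A B : 'M[R]_(a, b)) i j : (A - B) i j = A i j - B i j.
Proof. by rewrite [LHS]mxE [X in _ + X]mxE. Qed.

Lemma sum_pairs (S : {set 'I_r * 'I_m.+1}) (F : 'I_r -> 'I_m.+1 -> R) :
  \sum_(s in S) F s.1 s.2 = \sum_i \sum_j (if (i, j) \in S then F i j else 0).
Proof.
rewrite big_mkcond pair_big /=; apply: eq_bigr => [[i j]] _ //.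
Qed.

Lemma key (g : 'I_m.+1 -> R) j' : \sum_jj g jj = 0 ->
  g j' = \sum_jj (jj != ord0)%:R * g jj * ((j' == jj)%:R - (j' == ord0)%:R).
Proof.
move=> h0.
have h1 : \sum_jj (jj != ord0)%:R * g jj = - g ord0.
  have := h0; rewrite (bigD1 ord0) //= => /eqP; rewrite addr_eq0 => /eqP ->.
  rewrite opprK [RHS]big_mkcond; apply: eq_bigr => jj _.
  by case: (jj != ord0); rewrite ?mul1r ?mul0r.
under eq_bigr do rewrite mulrBr.
have h2 : \sum_jj (jj != ord0)%:R * g jj * (j' == jj)%:R = (j' != ord0)%:R * g j'.
  rewrite (bigD1 j') //= big1 ?addr0 ?eqxx ?mulr1 //.
  by move=> jj /negPf ne; rewrite [j' == jj]eq_sym ne mulr0.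
rewrite sumrB h2 -mulr_suml h1.
case: (eqVneq j' ord0) => [->|nz]; first by rewrite /= mul0r mulr1 opprK add0r.
by rewrite /= mul1r mulr0 subr0.
Qed.

Definition FS (S : {set 'I_r * 'I_m.+1}) : {set X} :=
  [set y : X | [forall i, (val y i == ord0) || ((i, val y i) \in S)]].

Lemma FS_ne (S : {set 'I_r * 'I_m.+1}) (z : X) i jj :
  z \in FS S -> jj != ord0 -> (i, jj) \notin S -> (val z i == jj) = false.
Proof.
rewrite inE => /forallP /(_ i) h nz nS; apply/negbTE; apply/eqP => e.
by move: h; rewrite e (negbTE nz) (negbTE nS).
Qed.

Lemma FS_dim (S : {set 'I_r * 'I_m.+1}) :
  (forall s, s \in S -> s.2 != ord0) -> face_dim_le D (FS S) #|S|.
Proof.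
move=> hS; rewrite /face_dim_le; case: pickP => [y0 y0F|] //.
set M := \matrix_(j, l) _.
pose G : 'M[R]_(_, #|S|) := \matrix_(j, t) M j (mxvec_index (enum_val t).1 (enum_val t).2).
pose H := \matrix_(t < #|S|, k < r * m.+1) mxvec (\matrix_(i, j)
    ((i == (enum_val t).1)%:R * ((j == (enum_val t).2)%:R - (j == ord0)%:R) : R)) 0 k.
suff -> : M = G *m H by apply: leq_trans (mxrankM_maxl G H) (rank_leq_col G).
apply/matrixP => j k; case/mxvec_indexP: k => i' j'.
rewrite [RHS]mxE.
under eq_bigr => t _ do rewrite [G _ _]mxE [H _ _]mxE mxvecE mxE.
rewrite -(big_enum_val (fun s => M j (mxvec_index s.1 s.2) *
     ((i' == s.1)%:R * ((j' == s.2)%:R - (j' == ord0)%:R)))) /=.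
set y := enum_val j.
pose dl (i : 'I_r) (j : 'I_m.+1) : R := (val y i == j)%:R - (val y0 i == j)%:R.
have eM i jj : M j (mxvec_index i jj) = if y \in FS S then dl i jj else 0.
  by rewrite /M mxE -/y; case: ifP => // _; rewrite subE !D_entry.
rewrite (sum_pairs S (fun i jj => M j (mxvec_index i jj) *
     ((i' == i)%:R * ((j' == jj)%:R - (j' == ord0)%:R)))).
rewrite (bigD1 i') //= [X in _ + X]big1 ?addr0; last first.
  move=> i /negPf ne; apply: big1 => jj _; case: ifP => // _.
  by rewrite eq_sym ne mul0r mulr0.
under eq_bigr => jj _ do rewrite eqxx mul1r.
rewrite eM; under eq_bigr => jj _ do rewrite eM.
case: ifP => yF; last first.
  by rewrite big1 // => jj _; case: ifP => // _; rewrite mul0r.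
have star jj : (if (i', jj) \in S then dl i' jj * ((j' == jj)%:R - (j' == ord0)%:R) else 0)
     = (jj != ord0)%:R * dl i' jj * ((j' == jj)%:R - (j' == ord0)%:R).
  case: (eqVneq jj ord0) => [->|nz].
    have nS : (i', ord0) \notin S by apply/negP => /hS; rewrite eqxx.
    by rewrite (negbTE nS) /= !mul0r.
  rewrite /= ?nz mul1r; case: ifP => // /negbT nS.
  by rewrite /dl (FS_ne yF nz nS) (FS_ne y0F nz nS) subrr mul0r.
under eq_bigr => jj _ do rewrite star.
apply: key.
by rewrite /dl sumrB !sum_delta subrr.
Qed.


Lemma FS_FA (S : {set 'I_r * 'I_m.+1}) :
  FS S = FA (fun i => [set j | (j == ord0) || ((i, j) \in S)]).
Proof. by apply/setP=> y; rewrite !inE; apply: eq_forallb => i; rewrite inE. Qed.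

Lemma set1_FA (x : X) : [set x] = FA (fun i => [set val x i]).
Proof.
apply/setP=> y; rewrite !inE; apply/eqP/forallP => [-> i|h]; first by rewrite inE.
by apply: val_inj; apply/ffunP => i; apply/eqP; move: (h i); rewrite inE.
Qed.

Lemma v0_proof : [forall i, (([ffun => ord0] : {ffun 'I_r -> 'I_m.+1}) i <= n i)%N].
Proof. by apply/forallP=> i; rewrite ffunE. Qed.
Definition v0 : X := @exist _ (fun f : {ffun 'I_r -> 'I_m.+1} => [forall i, (f i <= n i)%N]) _ v0_proof.

Lemma xs_proof (s : 'I_r * 'I_m.+1) :
  [forall i, (([ffun i => if (i == s.1) && (s.2 <= n s.1)%N then s.2 else ord0]
      : {ffun 'I_r -> 'I_m.+1}) i <= n i)%N].
Proof.
by apply/forallP=> i; rewrite ffunE; case: ifP => [/andP [/eqP -> h]|_].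
Qed.
Definition xs (s : 'I_r * 'I_m.+1) : X := @exist _ (fun f : {ffun 'I_r -> 'I_m.+1} => [forall i, (f i <= n i)%N]) _ (xs_proof s).

Lemma v0_FS (S : {set 'I_r * 'I_m.+1}) : v0 \in FS S.
Proof. by rewrite inE; apply/forallP=> i; rewrite /= ffunE eqxx. Qed.

Lemma xs_FS (S : {set 'I_r * 'I_m.+1}) (s : 'I_r * 'I_m.+1) : s \in S -> (s.2 <= n s.1)%N -> xs s \in FS S.
Proof.
move=> sS h; rewrite inE; apply/forallP=> i; rewrite /= ffunE h andbT.
case: (eqVneq i s.1) => [->|ne]; last by apply/orP; left; apply/eqP.
by rewrite /= -surjective_pairing sS orbT.
Qed.

Lemma xs_notFS (S : {set 'I_r * 'I_m.+1}) (s : 'I_r * 'I_m.+1) : s \notin S -> (0 < s.2)%N -> (s.2 <= n s.1)%N -> xs s \notin FS S.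
Proof.
move=> sS p h; rewrite inE; apply/negP => /forallP /(_ s.1).
rewrite /= ffunE eqxx h /= -surjective_pairing (negbTE sS) orbF => /eqP e.
by rewrite e in p.
Qed.

Definition Eset : {set 'I_r * 'I_m.+1} := [set s : 'I_r * 'I_m.+1 | (0 < s.2)%N && (s.2 <= n s.1)%N].

Lemma card_E : #|Eset| = (\sum_(i < r) n i)%N.
Proof.
rewrite -sum1_card big_mkcond /=.
transitivity (\sum_(i < r) \sum_(j < m.+1)
   (if (0 < j)%N && (j <= n i)%N then 1 else 0))%N.
  by rewrite pair_big /=; apply: eq_bigr => [[i j]] _; rewrite inE.
apply: eq_bigr => i _.
have hm : (n i <= m)%N by rewrite /maxn_of; exact: (@leq_bigmax _ n i).
rewrite -(big_mkord xpredT (fun j => if (0 < j)%N && (j <= n i)%N then 1 else 0)%N).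
rewrite big_ltn //= add0n (@big_cat_nat _ _ _ (n i).+1) //=.
rewrite (eq_big_nat _ _ (F2 := fun => 1%N)); last first.
  by move=> j /andP [h1 h2]; rewrite h1 -ltnS h2.
rewrite sum_nat_const_nat subn1 muln1 /= big_nat_cond big1 ?addn0 //.
by move=> j /andP [/andP [h1 _] _]; rewrite ltnNge in h1; rewrite (negbTE h1) andbF.
Qed.

End Delta.

Section Main.
Local Open Scope ring_scope.
Lemma main (R : realFieldType) (r : nat) (n : 'I_r -> nat) (k : nat)
    (d : nat) (I : finType) (V : I -> 'rV[R]_d) :
  (0 < r)%N -> (forall i, (0 < n i)%N) ->
  ((\sum_(i < r) n i)./2 <= k)%N ->
  PPSN k n V ->
  (\sum_(i < r) n i <= d)%N.
Proof.
move=> _ _ hk [[f [fsk [fsu fmo]]] _].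
rewrite leqNgt; apply/negP => hd.
set N := (\sum_(i < r) n i)%N in hk hd.
pose D := @delta_pt R r n.
have fset0 : f set0 = set0.
  have [S0 hS0 e0] := fsu set0 (skel0 D k).
  have := fmo set0 S0 (skel0 V k) hS0; rewrite sub0set e0 subset0 => /esym /eqP //.
have hidx : forall x : delta_vert n, exists i, exists T,
    [/\ skel_face V (Some k) T, f T = [set x] & i \in T].
  move=> x.
  have sx : skel_face D (Some k) [set x].
    by split; [rewrite set1_FA; exact: FA_face | exact: dim_single].
  have [T hT eT] := fsu _ sx.
  have : T != set0.
    apply/eqP => T0; move: eT; rewrite T0 fset0 => /setP /(_ x).
    by rewrite !inE eqxx.
  by case/set0Pn => i iT; exists i, T.
pose idx x := proj1_sig (constructive_indefinite_description _ (hidx x)).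
have idxP x : exists T, [/\ skel_face V (Some k) T, f T = [set x] & idx x \in T].
  exact: (proj2_sig (constructive_indefinite_description _ (hidx x))).
have propA U x : skel_face V (Some k) U -> x \in f U -> idx x \in U.
  move=> sU xU; have [T [sT eT iT]] := idxP x.
  have : T \subset U by rewrite (fmo _ _ sT sU) eT sub1set.
  by move/subsetP; apply.
have propB U x : skel_face V (Some k) U -> x \notin f U -> idx x \notin U.
  move=> sU xU; have [T [sT eT iT]] := idxP x.
  apply/negP => iU.
  have sX : skel_face V (Some k) (U :&: T).
    split; first by apply: faceI; [case: sU | case: sT].
    by apply: (dim_mono (subsetIr U T)); case: sT.
  have h1 : f (U :&: T) \subset [set x] by rewrite -eT -(fmo _ _ sX sT) subsetIr.
  have h2 : f (U :&: T) \subset f U by rewrite -(fmo _ _ sX sU) subsetIl.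
  have : f (U :&: T) \subset f set0.
    rewrite fset0; apply/subsetP => y yin.
    move: (subsetP h1 y yin); rewrite inE => /eqP ey.
    by move: (subsetP h2 y yin); rewrite ey (negbTE xU).
  rewrite -(fmo _ _ sX (skel0 V k)) subset0 => /eqP X0.
  by move: (in_setI (idx x) U T); rewrite X0 inE iU iT.
have cE := card_E n.
set E := Eset n in cE.
pose U : 'M[R]_(#|E|, d) :=
  \matrix_(t, l) (V (idx (xs (enum_val t))) - V (idx (v0 n))) 0 l.
have rowU t : row t U = V (idx (xs (enum_val t))) - V (idx (v0 n)).
  by apply/rowP => l; rewrite !mxE.
have Knz : kermx U != 0.
  rewrite -mxrank_eq0 mxrank_ker subn_eq0 -ltnNge.
  by apply: leq_ltn_trans (rank_leq_col U) _; rewrite cE.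
have [t1 ht1] : exists t, row t (kermx U) != 0.
  apply/existsP; apply: contraR Knz; rewrite negb_exists => /forallP h.
  apply/eqP/row_matrixP => t; rewrite row0; apply/eqP; exact: negbNE (h t).
pose w := row t1 (kermx U).
have wU : (w *m U = 0)%R by rewrite -row_mul mulmx_ker row0.
have [w' [w'U w'nz hcard]] : exists w' : 'rV[R]_#|E|, [/\ (w' *m U = 0)%R, w' != 0 &
    (#|[set t | (w' 0 t < 0)%R]| <= #|[set t | (0 < w' 0 t)%R]|)%N].
  case: (leqP #|[set t | w 0 t < 0]%R| #|[set t | 0 < w 0 t]%R|) => h.
    by exists w.
  exists (- w)%R; split; first by rewrite mulNmx wU oppr0.
    by rewrite oppr_eq0.
  have e1 : [set t | ((- w) 0 t < 0)%R] = [set t | (0 < w 0 t)%R].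
    by apply/setP => t; rewrite !inE mxE oppr_lt0.
  have e2 : [set t | (0 < (- w) 0 t)%R] = [set t | (w 0 t < 0)%R].
    by apply/setP => t; rewrite !inE mxE oppr_gt0.
  by rewrite e1 e2 ltnW.
set Neg := [set t | (w' 0 t < 0)%R] in hcard.
set Pos := [set t | (0 < w' 0 t)%R] in hcard.
have [t0 t0P] : exists t0, t0 \in Pos.
  apply/set0Pn; apply: contraNneq w'nz => P0.
  have N0 : Neg = set0.
    by apply/eqP; rewrite -cards_eq0 -leqn0; move: hcard; rewrite P0 cards0.
  apply/eqP/rowP => t; rewrite mxE.
  move/setP: P0 => /(_ t); move/setP: N0 => /(_ t); rewrite !inE.
  by case: (ltrgtP (w' 0 t) 0).
have hNeg : (#|Neg| <= k)%N.
  apply: leq_trans hk; rewrite geq_half_double -addnn /N.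
  apply: (@leq_trans #|E|); last by rewrite cE.
  apply: (leq_trans (leq_add (leqnn _) hcard)).
  have : Neg :&: Pos = set0.
    apply/setP => t; rewrite !inE; apply/negP => /andP [a b].
    by move: (lt_trans a b); rewrite ltxx.
  move=> NP; have := cardsU Neg Pos; rewrite NP cards0 subn0 => <-.
  by apply: leq_trans (max_card _) _; rewrite card_ord.
pose S := [set enum_val t | t in Neg].
have cS : #|S| = #|Neg| by rewrite card_imset //; exact: enum_val_inj.
have hS : forall s, s \in S -> s.2 != ord0.
  move=> s /imsetP [t _ ->]; have := enum_valP t; rewrite inE => /andP [p _].
  by apply/eqP => e; rewrite e in p.
have sG : skel_face D (Some k) (FS S).
  split; first by rewrite FS_FA; exact: FA_face.
  by apply: (dim_le_trans (k := #|S|)); [rewrite cS | exact: FS_dim].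
have [U0 sU0 eU0] := fsu _ sG.
have [c [b [hle eqU]]] := sU0.1.
pose phi i := (V i *m c) 0 0.
have phiv0 : phi (idx (v0 n)) = b.
  have : idx (v0 n) \in U0 by apply: propA => //; rewrite eU0 v0_FS.
  by rewrite eqU inE => /eqP.
have phiNeg t : t \in Neg -> phi (idx (xs (enum_val t))) = b.
  move=> tN; have : idx (xs (enum_val t)) \in U0.
    apply: propA => //; rewrite eU0 xs_FS //; first by apply/imsetP; exists t.
    by have := enum_valP t; rewrite inE => /andP [].
  by rewrite eqU inE => /eqP.
have phit0 : phi (idx (xs (enum_val t0))) < b.
  have : idx (xs (enum_val t0)) \notin U0.
    apply: propB => //; rewrite eU0; have := enum_valP t0; rewrite inE => /andP [p q].
    apply: xs_notFS => //; apply/imsetP => [[t tN e]].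
    have := enum_val_inj e => et; rewrite -et in tN.
    by move: t0P tN; rewrite !inE => a b'; move: (lt_trans a b'); rewrite ltxx.
  by rewrite eqU inE lt_neqAle hle andbT.
have Hsum : \sum_t w' 0 t * (phi (idx (xs (enum_val t))) - phi (idx (v0 n))) = 0.
  have scE (a : R) (A : 'M[R]_(1, 1)) : (a *: A) 0 0 = a * A 0 0 by rewrite [LHS]mxE.
  have h : ((w' *m U) *m c) 0 0 = 0 by rewrite w'U mul0mx mxE.
  rewrite (mulmx_sum_row w') mulmx_suml summxE in h; apply: (etrans _ h).
  apply: eq_bigr => t _; rewrite -scalemxAl scE rowU mulmxBl.
  by rewrite (subE (R := R)).
have : \sum_t w' 0 t * (phi (idx (xs (enum_val t))) - phi (idx (v0 n))) < 0.
  rewrite (bigD1 t0) //= phiv0.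
  rewrite -[X in _ < X](addr0 0); apply: ltr_leD.
    by rewrite pmulr_rlt0 ?subr_lt0 //; move: t0P; rewrite inE.
  apply: sumr_le0 => t _.
  case: (ltrgtP (w' 0 t) 0) => h.
  - by rewrite phiNeg ?subrr ?mulr0 // inE.
  - by apply: mulr_ge0_le0; [apply: ltW | rewrite subr_le0 hle].
  - by rewrite h mul0r.
by rewrite Hsum ltxx.
Qed.
End Main.

Unset Implicit Arguments. Set Strict Implicit.

Theorem theorem4p7 (R : realFieldType) (r : nat) (n : 'I_r -> nat) (k : nat)
    (d : nat) (I : finType) (V : I -> 'rV[R]_d) :
  (0 < r)%N -> (forall i, (0 < n i)%N) ->
  ((\sum_(i < r) n i)./2 <= k)%N ->
  PPSN k n V ->
  (\sum_(i < r) n i <= d)%N.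
Proof. exact: main. Qed.
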